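(* Let $G$ be a graph with length-function $\ell$, let $k$ be a natural number and let $H\subseteq G$. If $H$ is not $k$-geodesic in $G$, then $G$ contains a subgraph $T$ which is a tree with at most $k$ leaves and which, with respect to the restriction of $\ell$ to $T\cup H$, is a shortcut tree for $H$.
   Context: All graphs are finite; parallel edges are allowed, loops are not. A length-function on a graph $G$ is a map $\ell:E(G)\to\mathbb{R}^+$ (strictly positive reals); for a subgraph $H$ put $\ell(H)=\sum_{e\in E(H)}\ell(e)$, and subgraphs carry the restricted length-function. For $A\subseteq V(G)$, the Steiner distance $\mathrm{sd}_G(A)$ is the minimum of $\ell(S)$ over all connected subgraphs $S\subseteq G$ with $A\subseteq V(S)$ ($\infty$ if none exists). A subgraph $H\subseteq G$ is $k$-geodesic in $G$ if $\mathrm{sd}_H(A)=\mathrm{sd}_G(A)$ for every $A\subseteq V(H)$ with $|A|\le k$. $L(T)$ denotes the set of leaves of a tree $T$. Shortcut tree: let $H$ be a graph, $T$ a tree, both subgraphs of the graph $T\cup H$, and $\ell$ a length-function on $T\cup H$. Then $T$ is a shortcut tree for $H$ if (SCT1) $V(T)\cap V(H)=L(T)$; (SCT2) $E(T)\cap E(H)=\emptyset$; (SCT3) $\ell(T)<\mathrm{sd}_H(L(T))$; (SCT4) for every proper subset $B\subsetneq L(T)$ we have $\mathrm{sd}_H(B)\le \mathrm{sd}_T(B)$. *)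

(* Defs.v *)
(* Finite multigraphs: vertex type V, edge type E (both finite),
   endpoint map [ends : E -> V * V]; loops excluded by a hypothesis of the theorem.
   The ambient graph G is the whole (V, E, ends); subgraphs are pairs
   (vertex set, edge set) whose edges have both endpoints in the vertex set. *)
From HB Require Import structures.
From mathcomp Require Import all_boot all_order all_algebra.
Set Implicit Arguments. Unset Strict Implicit. Unset Printing Implicit Defensive.
Import Order.TTheory GRing.Theory Num.Theory.
Local Open Scope ring_scope.

Section Graphs.
Variables (R : realFieldType) (V E : finType) (ends : E -> V * V) (l : E -> R).

Definition sg := ({set V} * {set E})%type.

Definition Gfull : sg := (setT, setT).

Definition joins (e : E) (x y : V) : bool :=
  (ends e == (x, y)) || (ends e == (y, x)).

Definition wf (S : sg) : bool :=
  [forall e in S.2, ((ends e).1 \in S.1) && ((ends e).2 \in S.1)].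

Definition subg (S H : sg) : bool :=
  [&& wf S, S.1 \subset H.1 & S.2 \subset H.2].

Definition adj (S : sg) : rel V := fun x y => [exists e in S.2, joins e x y].

Definition connectedb (S : sg) : bool :=
  [forall u in S.1, forall v in S.1, connect (adj S) u v].

Definition len (S : sg) : R := \sum_(e in S.2) l e.

Definition cand (H : sg) (A : {set V}) (S : sg) : bool :=
  [&& subg S H, connectedb S & A \subset S.1].

(* Steiner distance: Some (minimum of l(S) over candidates), None = infinity *)
Definition sd (H : sg) (A : {set V}) : option R :=
  omap len [pick S : sg | cand H A S && [forall S' : sg, cand H A S' ==> (len S <= len S')]].

Definition ole (x y : option R) : bool :=
  match x, y with
  | _, None => true
  | None, Some _ => false
  | Some a, Some b => a <= b
  end.
Definition olt (x y : option R) : bool :=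
  match x, y with
  | None, _ => false
  | Some _, None => true
  | Some a, Some b => a < b
  end.

Definition k_geodesic (k : nat) (H G : sg) : Prop :=
  forall A : {set V}, A \subset H.1 -> (#|A| <= k)%N -> sd H A = sd G A.

Definition has_cycle (S : sg) : Prop :=
  exists (vs : seq V) (es : seq E),
    [/\ size vs = size es, (0 < size es)%N, uniq vs && uniq es,
        all (fun v => v \in S.1) vs && all (fun e => e \in S.2) es &
        forall (e0 : E) (v0 : V) (i : nat), (i < size es)%N ->
          joins (nth e0 es i) (nth v0 vs i) (nth v0 vs ((i.+1 %% size es)%N))].

Definition is_tree (T : sg) : Prop :=
  [/\ wf T, T.1 != set0, connectedb T & ~ has_cycle T].

Definition deg (S : sg) (v : V) : nat :=
  #|[set e in S.2 | ((ends e).1 == v) || ((ends e).2 == v)]|.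

Definition leaves (T : sg) : {set V} := [set v in T.1 | deg T v == 1%N].

(* T is a shortcut tree for H (l is the length function of the ambient graph,
   restricted to subgraphs) *)
Definition shortcut_tree (T H : sg) : Prop :=
  [/\ is_tree T,
      T.1 :&: H.1 = leaves T,
      T.2 :&: H.2 = set0,
      olt (Some (len T)) (sd H (leaves T))
    & forall B : {set V}, B \proper leaves T -> ole (sd H B) (sd T B)].

End Graphs.

(* Main.v *)
Require Import Defs.
From HB Require Import structures.
From mathcomp Require Import all_boot all_order all_algebra.
Import Order.TTheory GRing.Theory Num.Theory.
Local Open Scope ring_scope.
Set Implicit Arguments. Unset Strict Implicit. Unset Printing Implicit Defensive.

Section Basic.
Variables (V E : finType) (ends : E -> V * V).
Hypothesis noloop : forall e : E, (ends e).1 != (ends e).2.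

Definition inc (e : E) (v : V) := ((ends e).1 == v) || ((ends e).2 == v).

Lemma joinsC e x y : joins ends e x y = joins ends e y x.
Proof. by rewrite /joins orbC. Qed.

Lemma adjC (S : sg V E) : symmetric (adj ends S).
Proof.
move=> x y; apply/existsP/existsP => -[e /andP[He J]]; exists e;
  by rewrite He -joinsC.
Qed.

Lemma adj_sub (S S' : sg V E) x y : S.2 \subset S'.2 -> adj ends S x y -> adj ends S' x y.
Proof.
move=> sub /existsP[e /andP[He J]]; apply/existsP; exists e.
by rewrite J (subsetP sub).
Qed.

Lemma connect_sub_sg (S S' : sg V E) x y : S.2 \subset S'.2 ->
  connect (adj ends S) x y -> connect (adj ends S') x y.
Proof.
move=> sub; apply: connect_sub => a b Hab; apply: connect1; exact: adj_sub Hab.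
Qed.

Lemma joins_inc e x y : joins ends e x y -> inc e x && inc e y.
Proof. by rewrite /joins /inc => /orP[]/eqP ->; rewrite !eqxx ?orbT. Qed.

Lemma joins_neq e x y : joins ends e x y -> x != y.
Proof.
have := noloop e; rewrite /joins => nl /orP[]/eqP E1; rewrite E1 /= in nl;
  by [|rewrite eq_sym].
Qed.

Lemma joins_uniq e x y z : joins ends e x y -> joins ends e x z -> y = z.
Proof.
have := noloop e; rewrite /joins.
case: (ends e) => a b /= nl.
move=> /orP[]/eqP[<- <-] /orP[]/eqP[] //; try by move=> E1; rewrite E1 eqxx in nl.
by move=> E1 E2; subst; rewrite eqxx in nl.
Qed.

Lemma joins_eq e x y a b : joins ends e x y -> joins ends e a b ->
  (x = a /\ y = b) \/ (x = b /\ y = a).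
Proof.
rewrite /joins; case: (ends e) => c d.
by move=> /orP[]/eqP[-> ->] /orP[]/eqP[-> ->]; auto.
Qed.

Lemma wf_adj (S : sg V E) x y : wf ends S -> adj ends S x y -> (x \in S.1) && (y \in S.1).
Proof.
move=> /forall_inP W /existsP[e /andP[He J]].
have /andP[h1 h2] := W e He.
by move: J; rewrite /joins => /orP[]/eqP E1; rewrite E1 /= in h1 h2; rewrite h1 h2.
Qed.

Lemma connect_in (S : sg V E) x y : wf ends S -> x \in S.1 ->
  connect (adj ends S) x y -> y \in S.1.
Proof.
move=> W Hx /connectP[p P ->]; elim: p x Hx P => //= z p IH x Hx /andP[A P].
apply: IH P; by have /andP[] := wf_adj W A.
Qed.

Lemma connectedb_hub (S : sg V E) c :
  (forall u, u \in S.1 -> connect (adj ends S) c u) -> connectedb ends S.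
Proof.
move=> Hc; apply/forall_inP => u Hu; apply/forall_inP => v Hv.
have sym := sym_connect_sym (adjC S).
apply: connect_trans (Hc v Hv); rewrite sym; exact: Hc.
Qed.

Lemma deg_leaf_uniq (S : sg V E) x e f : deg ends S x = 1%N ->
  e \in S.2 -> inc e x -> f \in S.2 -> inc f x -> e = f.
Proof.
move=> /eqP/cards1P[g Hg] He Ie Hf If.
have : e \in [set e in S.2 | inc e x] by rewrite inE He.
have : f \in [set e in S.2 | inc e x] by rewrite inE Hf.
by rewrite /inc in Hg *; rewrite Hg !inE => /eqP -> /eqP ->.
Qed.

End Basic.

Section Len.
Variables (R : realFieldType) (V E : finType) (l : E -> R).
Hypothesis lpos : forall e, 0 < l e.

Lemma len_ge0 (S : sg V E) : 0 <= len l S.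
Proof. by apply: sumr_ge0 => e _; apply: ltW. Qed.

Lemma sum_split (X Y : {set E}) :
  \sum_(e in X) l e = \sum_(e in X :&: Y) l e + \sum_(e in X :\: Y) l e.
Proof. exact: big_setID. Qed.

Lemma len_sub (S S' : sg V E) : S.2 \subset S'.2 -> len l S <= len l S'.
Proof.
move=> sub; rewrite /len (sum_split S'.2 S.2) (setIidPr sub) lerDl.
by apply: sumr_ge0 => e _; apply: ltW.
Qed.

Lemma len_proper (S S' : sg V E) : S.2 \proper S'.2 -> len l S < len l S'.
Proof.
move=> /properP[sub [e He1 He2]].
rewrite /len (sum_split S'.2 S.2) (setIidPr sub) ltrDl.
rewrite (bigD1 e) /=; last by rewrite inE He1 He2.
apply: ltr_pwDl; first exact: lpos.
by apply: sumr_ge0 => i _; apply: ltW.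
Qed.

Lemma len_U (S1 S2 : sg V E) :
  \sum_(e in S1.2 :|: S2.2) l e <= len l S1 + len l S2.
Proof.
rewrite /len (sum_split (S1.2 :|: S2.2) S1.2).
have -> : (S1.2 :|: S2.2) :\: S1.2 = S2.2 :\: S1.2.
  by apply/setP => x; rewrite !inE; case: (x \in S1.2); rewrite ?andbF.
have -> : (S1.2 :|: S2.2) :&: S1.2 = S1.2.
  by apply/setP => x; rewrite !inE; case: (x \in S1.2); rewrite ?andbT ?andbF ?orbT.
apply: lerD => //.
rewrite (sum_split S2.2 S1.2) lerDr.
by apply: sumr_ge0 => e _; apply: ltW.
Qed.

End Len.
Section SD.
Variables (R : realFieldType) (V E : finType) (ends : E -> V * V) (l : E -> R).

Lemma sd_cand (H : sg V E) A S : cand ends H A S ->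
  exists S0, [/\ sd ends l H A = Some (len l S0), cand ends H A S0 &
     forall S', cand ends H A S' -> len l S0 <= len l S'].
Proof.
move=> HS; rewrite /sd.
case: pickP => [S0 /andP[C0 /forallP M]|none].
  exists S0; split => // S' C'; by have /implyP := M S'; apply.
exfalso.
case: (arg_minP (len l) HS) => S0 C0 min.
have := none S0; rewrite C0 /= => /negP; apply.
apply/forallP => S'; apply/implyP; exact: min.
Qed.

Lemma sd_some (H : sg V E) A m : sd ends l H A = Some m ->
  exists S0, [/\ m = len l S0, cand ends H A S0 &
     forall S', cand ends H A S' -> len l S0 <= len l S'].
Proof.
rewrite /sd; case: pickP => //= S0 /andP[C0 /forallP M] [<-].
exists S0; split => // S' C'; by have /implyP := M S'; apply.
Qed.

Lemma sd_none (H : sg V E) A S : sd ends l H A = None -> ~~ cand ends H A S.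
Proof.
move=> N; apply/negP => C; have [S0 [E0 _ _]] := sd_cand C; by rewrite N in E0.
Qed.

Lemma olt_le (a b : R) o : a <= b -> olt (Some b) o -> olt (Some a) o.
Proof. by case: o => //= m ab bm; apply: le_lt_trans bm. Qed.

Lemma notolt (a : R) o : ~~ olt (Some a) o -> exists m, o = Some m /\ m <= a.
Proof. by case: o => //= m; rewrite -leNgt => H; exists m. Qed.

Lemma notolt_ole (a : R) o : ~~ olt (Some a) o -> ole o (Some a).
Proof. by move=> /notolt[m [-> H]]. Qed.

End SD.
Section Graph2.
Variables (V E : finType) (ends : E -> V * V).
Hypothesis noloop : forall e : E, (ends e).1 != (ends e).2.

Lemma inc_joins e a b x : joins ends e a b -> inc ends e x -> x = a \/ x = b.
Proof.
rewrite /joins /inc; case: (ends e) => c d /=.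
by move=> /orP[]/eqP[-> ->] /orP[]/eqP ->; auto.
Qed.

Lemma remove_edge_conn (S : sg V E) g p q : g \in S.2 -> joins ends g p q ->
  connect (adj ends (S.1, S.2 :\ g)) p q -> connectedb ends S ->
  connectedb ends (S.1, S.2 :\ g).
Proof.
move=> Hg J Cpq /forall_inP C; apply/forall_inP => u Hu; apply/forall_inP => v Hv.
have /forall_inP/(_ v Hv) := C u Hu.
apply: connect_sub => a b /existsP[h /andP[Hh Jh]].
case: (eqVneq h g) => [Ehg|Nhg].
  subst h; case: (joins_eq J Jh) => -[<- <-] //.
  by rewrite (sym_connect_sym (adjC ends _)).
apply: connect1; apply/existsP; exists h; by rewrite !inE Nhg Hh.
Qed.

Lemma leaf_path (S : sg V E) x g : deg ends S x = 1%N -> g \in S.2 -> inc ends g x ->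
  forall n p a, (size p <= n)%N -> path (adj ends S) a p -> a != x -> last a p != x ->
  connect (adj ends (S.1 :\ x, S.2 :\ g)) a (last a p).
Proof.
move=> Dx Hg Ig; elim=> [|n IH] [|b p] a //= sz /andP[Aab P] Nax Nlast.
case: (eqVneq b x) => [Ebx|Nbx].
  subst b; case: p sz P Nlast => [|c p] sz P Nlast; first by rewrite /= eqxx in Nlast.
  move: P => /= /andP[Axc P].
  move: Aab => /existsP[h /andP[Hh Jh]]; move: Axc => /existsP[h' /andP[Hh' Jh']].
  have /andP[_ Ihx] := joins_inc Jh; have /andP[Ih'x _] := joins_inc Jh'.
  have Eh := deg_leaf_uniq Dx Hh Ihx Hg Ig; have Eh' := deg_leaf_uniq Dx Hh' Ih'x Hg Ig.
  subst h h'; rewrite joinsC in Jh; have Eac := joins_uniq noloop Jh Jh'; subst c.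
  apply: IH => //; rewrite /= ltnS in sz; exact: ltnW.
apply: connect_trans (IH p b sz P Nbx Nlast).
move: Aab => /existsP[h /andP[Hh Jh]]; apply: connect1; apply/existsP; exists h.
rewrite !inE Hh Jh !andbT.
apply/eqP => Ehg; subst h; case: (inc_joins Jh Ig) => Ex.
  by rewrite Ex eqxx in Nax.
by rewrite Ex eqxx in Nbx.
Qed.

Lemma leaf_removal (S : sg V E) x g : wf ends S -> deg ends S x = 1%N -> g \in S.2 ->
  inc ends g x -> connectedb ends S ->
  wf ends (S.1 :\ x, S.2 :\ g) && connectedb ends (S.1 :\ x, S.2 :\ g).
Proof.
move=> W Dx Hg Ig /forall_inP C; apply/andP; split.
  apply/forall_inP => h /=; rewrite !inE => /andP[Nhg Hh].
  move: W => /forall_inP/(_ h Hh) /andP[h1 h2].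
  rewrite h1 h2 !andbT.
  have Nx : ~~ inc ends h x by apply/negP => Ih; rewrite (deg_leaf_uniq Dx Hh Ih Hg Ig) eqxx in Nhg.
  by move: Nx; rewrite /inc negb_or => /andP[-> ->].
apply/forall_inP => u /=; rewrite !inE => /andP[Nux Hu].
apply/forall_inP => v /=; rewrite !inE => /andP[Nvx Hv].
have /forall_inP/(_ v Hv)/connectP[p P Ev] := C u Hu.
rewrite Ev; apply: (leaf_path Dx Hg Ig (leqnn _)) => //; by rewrite -Ev.
Qed.

Lemma two_leaves_path (S : sg V E) x y g : deg ends S x = 1%N -> deg ends S y = 1%N ->
  g \in S.2 -> joins ends g x y ->
  forall p a, path (adj ends S) a p -> a != x -> a != y ->
   (last a p != x) && (last a p != y).
Proof.
move=> Dx Dy Hg Jg; have /andP[Igx Igy] := joins_inc Jg.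
elim=> [|b p IH] a /=; first by move=> _ -> ->.
move=> /andP[/existsP[h /andP[Hh Jh]] P] Nax Nay.
have /andP[_ Ihb] := joins_inc Jh.
apply: IH => //; apply/eqP => Eb; subst b.
- have Ehg := deg_leaf_uniq Dx Hh Ihb Hg Igx; subst h.
  rewrite joinsC in Jh; by rewrite (joins_uniq noloop Jh Jg) eqxx in Nay.
- have Ehg := deg_leaf_uniq Dy Hh Ihb Hg Igy; subst h.
  rewrite joinsC in Jh; rewrite joinsC in Jg; by rewrite (joins_uniq noloop Jh Jg) eqxx in Nax.
Qed.

End Graph2.
Section Graph3.
Variables (V E : finType) (ends : E -> V * V).

Definition oth (e : E) (v : V) := if (ends e).1 == v then (ends e).2 else (ends e).1.

Lemma oth_joins e v : inc ends e v -> joins ends e v (oth e v).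
Proof.
rewrite /inc /oth /joins; case: (ends e) => a b /=.
case: (eqVneq a v) => [->|_] /=; first by rewrite eqxx.
by move=> /eqP ->; rewrite eqxx orbT.
Qed.

Lemma joins_ends e : joins ends e (ends e).1 (ends e).2.
Proof. by rewrite /joins; case: (ends e) => a b; rewrite eqxx. Qed.

Lemma joins_mem e a b (X : {set V}) : joins ends e a b ->
  ((ends e).1 \in X) || ((ends e).2 \in X) = (a \in X) || (b \in X).
Proof. by rewrite /joins; case: (ends e) => c d /= /orP[]/eqP[-> ->] //; rewrite orbC. Qed.

End Graph3.
Section Main.
Variables (R : realFieldType) (V E : finType) (ends : E -> V * V).
Hypothesis noloop : forall e : E, (ends e).1 != (ends e).2.
Variables (l : E -> R).
Hypothesis lpos : forall e, 0 < l e.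
Variables (k : nat) (H : sg V E).
Hypothesis HG : subg ends H (Gfull V E).

Definition bad (A : {set V}) (S : sg V E) :=
  [&& A \subset H.1, (#|A| <= k)%N, cand ends (Gfull V E) A S &
      olt (Some (len l S)) (sd ends l H A)].

Lemma wfH : wf ends H. Proof. by case/and3P: HG. Qed.

Lemma candG (A : {set V}) S : wf ends S -> connectedb ends S -> A \subset S.1 ->
  cand ends (Gfull V E) A S.
Proof. by move=> W C AS; rewrite /cand /subg W C AS !subsetT. Qed.

Lemma candHG (A : {set V}) S : cand ends H A S -> cand ends (Gfull V E) A S.
Proof. by case/and3P => /and3P[W _ _] C AS; apply: candG. Qed.

Lemma exists_bad : ~ k_geodesic ends l k H (Gfull V E) -> exists A S, bad A S.
Proof.
move=> NG.
case: (boolP [exists A : {set V}, [&& A \subset H.1, (#|A| <= k)%N &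
          sd ends l H A != sd ends l (Gfull V E) A]]).
  move=> /existsP[A /and3P[AH Ak Ne]].
  case EG: (sd ends l (Gfull V E) A) => [m|].
  - have [S [Em CS MS]] := sd_some EG.
    exists A, S; rewrite /bad AH Ak CS /= -Em.
    case EH: (sd ends l H A) => [m'|] //=.
    have [S' [Em' CS' _]] := sd_some EH.
    rewrite EH EG in Ne.
    rewrite lt_neqAle; apply/andP; split.
      by apply/eqP => E1; move: Ne; rewrite E1 eqxx.
    by rewrite Em Em'; apply: MS; apply: candHG.
  - case EH: (sd ends l H A) => [m'|]; last by rewrite EH EG in Ne.
    have [S' [_ CS' _]] := sd_some EH.
    by have := sd_none S' EG; rewrite candHG.
move=> NE; exfalso; apply: NG => A AH Ak; apply/eqP; apply/negPn/negP => Ne.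
by move/negP: NE; apply; apply/existsP; exists A; rewrite AH Ak Ne.
Qed.

Section Minimal.
Variables (A : {set V}) (T : sg V E).
Hypothesis badT : bad A T.
Hypothesis minT : forall A' S', bad A' S' -> (#|T.2| <= #|S'.2|)%N.

Lemma AH : A \subset H.1. Proof. by case/and4P: badT. Qed.
Lemma Ak : (#|A| <= k)%N. Proof. by case/and4P: badT. Qed.
Lemma wfT : wf ends T. Proof. by case/and4P: badT => _ _ /and3P[/and3P[]]. Qed.
Lemma connT : connectedb ends T. Proof. by case/and4P: badT => _ _ /and3P[]. Qed.
Lemma AT : A \subset T.1. Proof. by case/and4P: badT => _ _ /and3P[]. Qed.
Lemma ltT : olt (Some (len l T)) (sd ends l H A). Proof. by case/and4P: badT. Qed.

Lemma F0 S : cand ends H A S -> len l T < len l S.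
Proof.
move=> C; have [S0 [E0 _ M]] := sd_cand l C; have := ltT; rewrite E0 /= => lt.
exact: lt_le_trans lt (M S C).
Qed.

Lemma smaller (A' : {set V}) (S' : sg V E) : (#|S'.2| < #|T.2|)%N -> A' \subset H.1 -> (#|A'| <= k)%N ->
  cand ends (Gfull V E) A' S' -> ~~ olt (Some (len l S')) (sd ends l H A').
Proof.
move=> lt AH' Ak' C; apply/negP => O.
have := @minT A' S'; rewrite /bad AH' Ak' C O => /(_ isT).
by rewrite leqNgt lt.
Qed.

Lemma no_smaller (S' : sg V E) : S'.2 \proper T.2 -> wf ends S' -> connectedb ends S' ->
  A \subset S'.1 -> False.
Proof.
move=> P W C AS; have := smaller (proper_card P) AH Ak (candG W C AS).
by rewrite (olt_le (ltW (len_proper lpos P))) ?ltT.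
Qed.

Lemma wf_sub_edges (X : {set E}) : X \subset T.2 -> wf ends (T.1, X).
Proof.
move=> sub; apply/forall_inP => h Hh /=.
exact: (forall_inP wfT h (subsetP sub h Hh)).
Qed.

Lemma no_redundant e : e \in T.2 -> ~~ connectedb ends (T.1, T.2 :\ e).
Proof.
move=> He; apply/negP => C; apply: (@no_smaller (T.1, T.2 :\ e)) => //=.
- exact: properD1.
- by apply: wf_sub_edges; apply: subD1set.
- exact: AT.
Qed.


Lemma exists_edge : exists e, e \in T.2.
Proof.
case: (set_0Vmem T.2) => [E0|[e He]]; last by exists e.
exfalso.
have C0 : forall a b, connect (adj ends T) a b -> a = b.
  move=> a b /connectP[[|c p] //= /andP[/existsP[h /andP[Hh _]] _]].
  by rewrite E0 inE in Hh.
suff: cand ends H A (A, set0) by move/F0; rewrite /len E0 !big_set0 ltxx.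
rewrite /cand /subg /= AH sub0set subxx !andbT; apply/andP; split.
  by apply/forall_inP => h; rewrite inE.
apply/forall_inP => a Ha; apply/forall_inP => b Hb.
have Ta := subsetP AT a Ha; have Tb := subsetP AT b Hb.
have /forall_inP/(_ b Tb) := forall_inP connT a Ta.
by move/C0 ->.
Qed.

Lemma leaves_A : leaves ends T \subset A.
Proof.
apply/subsetP => x; rewrite inE => /andP[Hx /eqP Dx].
apply/negPn/negP => NxA.
have := Dx; rewrite /deg => /eqP/cards1P[g Eg].
have : g \in [set e in T.2 | ((ends e).1 == x) || ((ends e).2 == x)] by rewrite Eg set11.
rewrite inE => /andP[Hg Ig].
have /andP[W C] := leaf_removal noloop wfT Dx Hg Ig connT.
apply: (@no_smaller (T.1 :\ x, T.2 :\ g)) => //=.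
- exact: properD1.
- apply/subsetP => a Ha; rewrite !inE (subsetP AT _ Ha) andbT.
  by apply/eqP => Eax; subst a; rewrite Ha in NxA.
Qed.

Lemma no_cycle : ~ has_cycle ends T.
Proof.
move=> [vs [es [Esz Hpos /andP[Uv Ue] /andP[Av Ae] J]]].
case: es Esz Hpos Ue Ae J => [|g es'] //= Esz _ Ue Ae J.
case: vs Esz Uv Av J => [|v0 vs'] //= [Esz] Uv Av J.
have Hg : g \in T.2 by move: Ae => /andP[].
have Jg := J g v0 0%N isT.
case: es' Esz Ue Ae J Jg => [|g1 es''] Esz Ue Ae J Jg.
  by move: Jg; rewrite modnn /= => /(joins_neq noloop); rewrite eqxx.
set n := (size (g1 :: es'')).+1 in J Jg.
have n2 : (1 < n)%N by rewrite /n /= ltnS.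
rewrite /n /= in Jg.
set p := nth v0 vs' 0 in Jg.
have claim : forall i, (1 <= i <= n)%N ->
    connect (adj ends (T.1, T.2 :\ g)) p (nth v0 (v0 :: vs') (i %% n)).
  elim=> [//|i IHi] /andP[i1 iN].
  case: (posnP i) => [->|ipos].
    by rewrite (modn_small n2).
  have iltn : (i < n)%N by [].
  have := IHi; rewrite ipos (ltnW iN) => /(_ isT); rewrite (modn_small iltn) => Ci.
  apply: connect_trans Ci _; apply: connect1.
  have Ji := J g v0 i iltn.
  apply/existsP; exists (nth g (g :: g1 :: es'') i); rewrite Ji andbT !inE.
  rewrite (allP (Ae : all (fun e => e \in T.2) [:: g, g1 & es''])) ?mem_nth // andbT.
  have := nth_uniq g (iltn : (i < size [:: g, g1 & es''])%N) (isT : (0 < size [:: g, g1 & es''])%N) (Ue : uniq [:: g, g1 & es'']).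
  by rewrite /= => ->; rewrite -lt0n ipos.
have := claim n; rewrite (ltnW n2) leqnn modnn /= => /(_ isT) Cpv.
have := no_redundant Hg; rewrite (remove_edge_conn Hg Jg) //.
by rewrite (sym_connect_sym (adjC ends _)).
exact: connT.
Qed.

Lemma interior_not_H v : v \in T.1 -> v \in H.1 -> v \in leaves ends T.
Proof.
move=> Hv HvH; rewrite inE Hv /=; apply/negPn/negP => Dv.
have [e0 He0] := exists_edge.
have /andP[a1 a2] := forall_inP wfT e0 He0.
have [w [Tw Nwv]] : exists w, w \in T.1 /\ w != v.
  case: (eqVneq (ends e0).1 v) => [E1|N1]; last by exists (ends e0).1.
  by exists (ends e0).2; split => //; rewrite -E1 eq_sym noloop.
have D1 : (0 < deg ends T v)%N.
  have /forall_inP/(_ w Tw)/connectP[[|b p] /= P Ew] := forall_inP connT v Hv.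
    by rewrite Ew eqxx in Nwv.
  move: P => /andP[/existsP[h /andP[Hh Jh]] _].
  apply/card_gt0P; exists h; rewrite inE Hh /=.
  by have /andP[] := joins_inc Jh.
have D2 : (1 < deg ends T v)%N by rewrite ltn_neqAle eq_sym Dv.
move/card_gt1P: D2 => [e [f [He Hf Nef]]].
rewrite !inE in He Hf; move: He Hf => /andP[He Ie] /andP[Hf If].
have Je : joins ends e v (oth ends e v) := oth_joins Ie.
have Jf : joins ends f v (oth ends f v) := oth_joins If.
move: Je Jf; set u := oth ends e v; set u' := oth ends f v => Je Jf.
have Nuv : u != v by rewrite eq_sym (joins_neq noloop Je).
pose adjv := [rel a b | [&& a != v, b != v & adj ends T a b]].
pose C := [set w | connect adjv u w].
have pathv : forall p a, a != v -> path adjv a p -> last a p != v.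
  elim=> [|b p IH] a //= _ /andP[/and3P[_ Nb _] P]; exact: IH P.
have Cnv : forall w, w \in C -> w != v.
  move=> w0; rewrite /C inE => /connectP[p P ->]; exact: pathv.
have Cstep : forall w0 b, w0 \in C -> adj ends T w0 b -> b != v -> b \in C.
  move=> w0 b Cw Awb Nb; have Nw := Cnv w0 Cw; move: Cw; rewrite /C !inE => Cw.
  apply: connect_trans Cw (connect1 _); by rewrite /= Nw Nb Awb.
have adjv_sub : forall a b, adjv a b -> adj ends (T.1, T.2 :\ e) a b.
  move=> a b /and3P[Na Nb /existsP[h /andP[Hh Jh]]]; apply/existsP; exists h.
  rewrite !inE Hh Jh !andbT; apply/eqP => Ehe; subst h.
  by case: (inc_joins Jh Ie) => Ev; [rewrite Ev eqxx in Na | rewrite Ev eqxx in Nb].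
case: (boolP (u' \in C)) => [Cu'|NCu'].
  apply: (negP (no_redundant He)); apply: (remove_edge_conn He Je) _ connT.
  rewrite (sym_connect_sym (adjC ends _)).
  apply: (@connect_trans _ _ u').
    move: Cu'; rewrite /C inE; apply: connect_sub => a b Hab; apply: connect1; exact: adjv_sub.
  apply: connect1; apply/existsP; exists f; rewrite !inE Hf joinsC Jf !andbT.
  by rewrite eq_sym.
pose T1 : sg V E := (v |: C, [set h in T.2 | ((ends h).1 \in C) || ((ends h).2 \in C)]).
pose T2 : sg V E := (T.1 :\: C, [set h in T.2 | ((ends h).1 \notin C) && ((ends h).2 \notin C)]).
have Avu : adj ends T v u by apply/existsP; exists e; rewrite He Je.
have /andP[_ Tu] := wf_adj wfT Avu.
have Cu : u \in C by rewrite /C inE connect0.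
have NCv : v \notin C by apply/negP => /Cnv; rewrite eqxx.
have T1sub : T1.2 \subset T.2 by apply/subsetP => h; rewrite inE => /andP[].
have T2sub : T2.2 \subset T.2 by apply/subsetP => h; rewrite inE => /andP[].
have fT1 : f \notin T1.2 by rewrite inE Hf (joins_mem C Jf) (negbTE NCv) (negbTE NCu').
have eT2 : e \notin T2.2 by rewrite inE He -negb_or (joins_mem C Je) Cu orbT.
have P1 : T1.2 \proper T.2 by apply/properP; split => //; exists f.
have P2 : T2.2 \proper T.2 by apply/properP; split => //; exists e.
have oneC : forall h a b, h \in T.2 -> joins ends h a b -> a \in C -> b \in v |: C.
  move=> h a b Hh Jh Ca; rewrite in_setU1; case: (eqVneq b v) => //= Nb.
  apply: (Cstep a) => //; apply/existsP; exists h; by rewrite Hh Jh.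
have wfT1 : wf ends T1.
  apply/forall_inP => h /=; rewrite inE => /andP[Hh Ch].
  have Jh := joins_ends ends h.
  move: Ch => /orP[C1|C2].
    by rewrite (oneC h _ _ Hh Jh C1) in_setU1 C1 orbT.
  by rewrite joinsC in Jh; rewrite (oneC h _ _ Hh Jh C2) in_setU1 C2 orbT.
have pathC : forall p a, a \in C -> path adjv a p -> connect (adj ends T1) a (last a p).
  elim=> [|b p IH] a Ca //= /andP[Aab P].
  have Cb : b \in C by move: Aab => /and3P[_ Nb Ab]; apply: (Cstep a).
  apply: connect_trans (IH b Cb P); apply: connect1.
  move: Aab => /and3P[_ _ /existsP[h /andP[Hh Jh]]]; apply/existsP; exists h.
  by rewrite Jh inE Hh (joins_mem C Jh) Ca.
have connT1 : connectedb ends T1.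
  apply: (@connectedb_hub _ _ _ _ u) => w0 /=; rewrite in_setU1 => /orP[/eqP->|Cw].
    apply: connect1; apply/existsP; exists e.
    by rewrite joinsC Je andbT inE He (joins_mem C Je) Cu orbT.
  move: Cw; rewrite /C inE => /connectP[p P ->]; exact: pathC.
have wfT2 : wf ends T2.
  apply/forall_inP => h /=; rewrite inE => /and3P[Hh N1 N2].
  have /andP[t1 t2] := forall_inP wfT h Hh.
  by rewrite !in_setD N1 N2 t1 t2.
have pathT2 : forall p a, a \notin C -> path (adj ends T) a p -> last a p = v ->
    connect (adj ends T2) a v.
  elim=> [|b p IH] a NCa /=; first by move=> _ ->.
  move=> /andP[/existsP[h /andP[Hh Jh]] P] Ev.
  case: (eqVneq a v) => [->|Nav]; first exact: connect0.
  have NCb : b \notin C.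
    case: (eqVneq b v) => [->//|Nbv].
    apply/negP => Cb; move/negP: NCa; apply.
    by apply: (Cstep b) => //; apply/existsP; exists h; rewrite Hh joinsC.
  apply: connect_trans (IH b NCb P Ev); apply: connect1; apply/existsP; exists h.
  by rewrite Jh inE Hh -negb_or (joins_mem C Jh) negb_or NCa NCb.
have connT2 : connectedb ends T2.
  apply: (@connectedb_hub _ _ _ _ v) => w0 /=; rewrite in_setD => /andP[NCw Tw0].
  have /forall_inP/(_ v Hv)/connectP[p P Ev] := forall_inP connT w0 Tw0.
  rewrite (sym_connect_sym (adjC ends _)); exact: pathT2 NCw P (esym Ev).
have lenT : len l T = len l T1 + len l T2.
  rewrite /len (sum_split l T.2 T1.2) (setIidPr T1sub); congr (_ + _).
  apply: eq_bigl => h; rewrite !inE.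
  by case: (h \in T.2); rewrite /= ?andbF // negb_or andbT.
have T12 : T.1 \subset T1.1 :|: T2.1.
  apply/subsetP => x Tx; rewrite /= in_setU in_setU1 in_setD Tx andbT.
  by case: (x \in C); rewrite ?orbT.
have part : forall Ti : sg V E, Ti.2 \proper T.2 -> wf ends Ti -> connectedb ends Ti ->
    v \in Ti.1 -> exists Si, cand ends H (v |: (A :&: Ti.1)) Si /\ len l Si <= len l Ti.
  move=> Ti Pi Wi Ci vi.
  case: (boolP (A \subset Ti.1)) => [sub|/subsetPn[a Aa NTa]].
    by exfalso; exact: no_smaller Pi Wi Ci sub.
  have AiH : v |: (A :&: Ti.1) \subset H.1.
    apply/subsetP => x; rewrite in_setU1 in_setI => /orP[/eqP->//|/andP[xA _]].
    exact: (subsetP AH).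
  have Aik : (#|v |: (A :&: Ti.1)| <= k)%N.
    apply: leq_trans Ak; rewrite cardsU1.
    have lt : (#|A :&: Ti.1| < #|A|)%N.
      apply: proper_card; apply/properP; split; first exact: subsetIl.
      by exists a; rewrite // in_setI Aa (negbTE NTa).
    apply: leq_trans lt; by rewrite -add1n leq_add2r leq_b1.
  have AiT : v |: (A :&: Ti.1) \subset Ti.1.
    by apply/subsetP => x; rewrite in_setU1 in_setI => /orP[/eqP->//|/andP[_ ->]].
  have := smaller (proper_card Pi) AiH Aik (candG Wi Ci AiT).
  move=> /notolt[m [Em mle]].
  have [Si [Ems CSi _]] := sd_some Em.
  by exists Si; split => //; rewrite -Ems.
have [S1 [CS1 le1]] := part T1 P1 wfT1 connT1 (setU11 v C).
have v2 : v \in T2.1 by rewrite /= in_setD NCv Hv.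
have [S2 [CS2 le2]] := part T2 P2 wfT2 connT2 v2.
have : cand ends H A (S1.1 :|: S2.1, S1.2 :|: S2.2).
  move: CS1 CS2 => /and3P[/and3P[W1 V1 E1] C1 A1] /and3P[/and3P[W2 V2 E2] C2 A2].
  apply/and3P; split.
  - apply/and3P; split => /=; [| by rewrite subUset V1 V2 | by rewrite subUset E1 E2].
    apply/forall_inP => h /=; rewrite in_setU => /orP[h1|h2].
      by have /andP[x1 x2] := forall_inP W1 h h1; rewrite !in_setU x1 x2.
    by have /andP[x1 x2] := forall_inP W2 h h2; rewrite !in_setU x1 x2 !orbT.
  - have vS1 : v \in S1.1 by apply: (subsetP A1); rewrite setU11.
    have vS2 : v \in S2.1 by apply: (subsetP A2); rewrite setU11.
    apply: (@connectedb_hub _ _ _ _ v) => w0 /=; rewrite in_setU => /orP[w1|w2].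
      apply: (@connect_sub_sg _ _ _ S1) => /=; first exact: subsetUl.
      exact: (forall_inP (forall_inP C1 v vS1) w0 w1).
    apply: (@connect_sub_sg _ _ _ S2) => /=; first exact: subsetUr.
    exact: (forall_inP (forall_inP C2 v vS2) w0 w2).
  - apply/subsetP => a Aa /=; have := subsetP T12 a (subsetP AT a Aa).
    rewrite in_setU => /orP[ya1|ya2].
      by rewrite in_setU (subsetP A1) // in_setU1 in_setI Aa ya1 orbT.
    by rewrite in_setU (subsetP A2) ?orbT // in_setU1 in_setI Aa ya2 orbT.
move/F0; rewrite lenT => lt.
have := lt_le_trans lt (len_U lpos S1 S2).
have := lerD le1 le2.
by move=> /le_lt_trans h /h; rewrite ltxx.
Qed.

Lemma leaves_sub_T : leaves ends T \subset T.1.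
Proof. by apply/subsetP => x; rewrite inE => /andP[]. Qed.

Lemma A_leaves : A = leaves ends T.
Proof.
apply/eqP; rewrite eqEsubset leaves_A andbT.
apply/subsetP => a Aa; apply: interior_not_H; [exact: (subsetP AT) | exact: (subsetP AH)].
Qed.

Lemma SCT1 : T.1 :&: H.1 = leaves ends T.
Proof.
apply/eqP; rewrite eqEsubset; apply/andP; split.
  apply/subsetP => x; rewrite in_setI => /andP[]; exact: interior_not_H.
apply/subsetP => x Lx; rewrite in_setI (subsetP leaves_sub_T x Lx).
by rewrite (subsetP AH) // A_leaves.
Qed.

Lemma leaf_deg x : x \in leaves ends T -> deg ends T x = 1%N.
Proof. by rewrite inE => /andP[_ /eqP]. Qed.

Lemma SCT2 : T.2 :&: H.2 = set0.
Proof.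
apply/setP => g; rewrite in_setI in_set0; apply/negP => /andP[Hg HgH].
have Jg : joins ends g (ends g).1 (ends g).2 := joins_ends ends g.
have /andP[Tx Ty] := forall_inP wfT g Hg.
have /andP[Hx Hy] := forall_inP wfH g HgH.
move: Jg Tx Ty Hx Hy; set x := (ends g).1; set y := (ends g).2 => Jg Tx Ty Hx Hy.
have Dx := leaf_deg (interior_not_H Tx Hx).
have Dy := leaf_deg (interior_not_H Ty Hy).
have Txy : T.1 \subset [set x; y].
  apply/subsetP => w Tw; rewrite !inE; apply/negPn/negP; rewrite negb_or => /andP[Nwx Nwy].
  have /forall_inP/(_ x Tx)/connectP[p P Ex] := forall_inP connT w Tw.
  have := two_leaves_path noloop Dx Dy Hg Jg P Nwx Nwy.
  by rewrite -Ex eqxx.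
have : cand ends H A ([set x; y], [set g]).
  apply/and3P; split.
  - apply/and3P; split => /=.
    + apply/forall_inP => h /=; rewrite inE => /eqP ->; by rewrite !inE !eqxx ?orbT.
    + by apply/subsetP => w; rewrite !inE => /orP[]/eqP->.
    + by apply/subsetP => h; rewrite inE => /eqP->.
  - apply: (@connectedb_hub _ _ _ _ x) => w /=; rewrite !inE => /orP[]/eqP->; first exact: connect0.
    by apply: connect1; apply/existsP; exists g; rewrite inE eqxx.
  - exact: subset_trans AT Txy.
move/F0; rewrite /len /= big_set1 => lt.
have : l g <= \sum_(e in T.2) l e.
  rewrite (bigD1 g) //= lerDl; apply: sumr_ge0 => i _; exact: ltW.
by rewrite leNgt lt.
Qed.

Lemma SCT4 (B : {set V}) : B \proper leaves ends T -> ole (sd ends l H B) (sd ends l T B).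
Proof.
move=> PB; have /properP[BL [x Lx NxB]] := PB.
have Dx := leaf_deg Lx.
have := Dx; rewrite /deg => /eqP/cards1P[g Eg].
have : g \in [set e in T.2 | ((ends e).1 == x) || ((ends e).2 == x)] by rewrite Eg set11.
rewrite inE => /andP[Hg Ig].
have /andP[W' C'] := leaf_removal noloop wfT Dx Hg Ig connT.
have BT : B \subset T.1 by apply: subset_trans BL leaves_sub_T.
have BT' : B \subset T.1 :\ x.
  apply/subsetP => b Bb; rewrite !inE (subsetP BT b Bb) andbT.
  by apply/eqP => Ebx; subst b; rewrite Bb in NxB.
have CT' : cand ends T B (T.1 :\ x, T.2 :\ g).
  by rewrite /cand /subg W' C' BT' /= subsetDl subD1set.
have [S0 [E0 CS0 M0]] := sd_cand l CT'.
rewrite E0; apply: notolt_ole.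
move: CS0 => /and3P[/and3P[W0 V0 E0s] C0 B0].
have BA : B \subset A by rewrite A_leaves.
have BH : B \subset H.1 := subset_trans BA AH.
have Bk : (#|B| <= k)%N := leq_trans (subset_leq_card BA) Ak.
case: (boolP (S0.2 \proper T.2)) => [P0|NP0].
  exact: smaller (proper_card P0) BH Bk (candG W0 C0 B0).
exfalso.
have ES : S0.2 = T.2.
  by apply/eqP; move: NP0; rewrite properEneq E0s andbT negbK.
have := M0 _ CT'.
have : len l (T.1 :\ x, T.2 :\ g) < len l S0.
  rewrite /len ES; exact: (@len_proper _ _ _ _ lpos (T.1 :\ x, T.2 :\ g) T (properD1 Hg)).
by move=> /lt_le_trans h /h; rewrite ltxx.
Qed.

Lemma result : exists T0 : sg V E,
  [/\ subg ends T0 (Gfull V E), is_tree ends T0, (#|leaves ends T0| <= k)%N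
    & shortcut_tree ends l T0 H].
Proof.
have tree : is_tree ends T.
  split; [exact: wfT| |exact: connT|exact: no_cycle].
  have [e0 He0] := exists_edge; have /andP[t1 _] := forall_inP wfT e0 He0.
  by apply/set0Pn; exists (ends e0).1.
exists T; split => //.
- by case/and4P: badT => _ _ /and3P[].
- by rewrite -A_leaves Ak.
- split => //; [exact: SCT1 | exact: SCT2 | by rewrite -A_leaves ltT | exact: SCT4].
Qed.

End Minimal.
End Main.

Unset Implicit Arguments.
Set Strict Implicit.

Theorem lemma3p1 (R : realFieldType) (V E : finType) (ends : E -> V * V)
  (noloop : forall e : E, (ends e).1 != (ends e).2)
  (l : E -> R) (lpos : forall e : E, 0 < l e)
  (k : nat) (H : sg V E) (HG : subg ends H (Gfull V E)) :
  ~ k_geodesic ends l k H (Gfull V E) ->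
  exists T : sg V E,
    [/\ subg ends T (Gfull V E), is_tree ends T, (#|leaves ends T| <= k)%N
      & shortcut_tree ends l T H].
Proof.
move=> NG.
have [A0 [S0 B0]] := exists_bad NG.
pose P := fun n => [exists p : {set V} * sg V E, bad ends l k H p.1 p.2 && (#|p.2.2| == n)].
have exP : exists n, P n.
  by exists #|S0.2|; apply/existsP; exists (A0, S0); rewrite B0 eqxx.
case: (ex_minnP exP) => m /existsP[[A T] /andP[BT /eqP Em]] Mm.
apply: (result noloop lpos HG BT) => A' S' B'.
rewrite /= in Em; rewrite Em; apply: Mm; apply/existsP; exists (A', S'); by rewrite B' eqxx.
Qed.
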